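(* Let $m\ge1$, let $R_-,R_+\subset\mathbb Z$ be disjoint arithmetic progressions with common difference $m$ with $|R_-|+|R_+|=d$ and $\min(R_-\cup R_+)=0$, and let $T_{long}=T_{I,R}$ be the associated long-diagonal pentagram map in $\mathbb{RP}^d$. Define $$J_\pm=\{\max R_\pm,\ \max R_\pm+m,\ \dots,\ \min R_\pm+m(d-1)\}=\bigcap_{r\in R_\pm}\{r,r+m,\dots,r+m(d-1)\}.$$ Then $|J_-|+|J_+|=d+2$, and for a generic twisted $n$-gon $\{v_k\}$ in $\mathbb{RP}^d$ one has, for every $k$, $$\bigcap_{r\in R_\pm}P_{k+r}=\mathrm{span}\{v_{k+j}:j\in J_\pm\},\qquad \hat v_k=\mathrm{span}\{v_{k+j}:j\in J_-\}\cap\mathrm{span}\{v_{k+j}:j\in J_+\}.$$ Moreover $J_-$ and $J_+$ are disjoint, except in the case $R_-=\{0,m,\dots,km\}$, $R_+=\{(k+1)m,\dots,(d-1)m\}$ (or the same with $R_-$ and $R_+$ swapped), in which $T_{I,R}$ is the identity map up to a shift of indices.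
   Context: For $(d-1)$-tuples of positive integers $I=(i_1,\dots,i_{d-1})$ and $R=(r_1,\dots,r_{d-1})$ and a twisted $n$-gon $\{v_k\}$ in $\mathbb{RP}^d$ (a sequence with $v_{k+n}=M(v_k)$ for a fixed projective transformation $M$), define the diagonal hyperplanes $P_k=\mathrm{span}\langle v_k,v_{k+i_1},\dots,v_{k+i_1+\dots+i_{d-1}}\rangle$ and the map $T_{I,R}$ by $\hat v_k=P_k\cap P_{k+r_1}\cap\dots\cap P_{k+r_1+\dots+r_{d-1}}$. A long-diagonal pentagram map is $T_{I,R}$ where $I=(m,\dots,m)$ and $R$ is the sequence of differences between consecutive elements of $R_-\cup R_+$ (in increasing order), for two disjoint arithmetic progressions $R_-,R_+$ with common difference $m$ and $d$ elements in total. *)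

(* Defs.v *)
(* projective space RP^d is modelled by nonzero row vectors of
   'rV[K]_(d.+1) over a real field K; projective subspaces are vector subspaces
   ({vspace _}) of K^(d+1). *)
From HB Require Import structures.
From mathcomp Require Import all_boot all_order all_algebra.
Set Implicit Arguments. Unset Strict Implicit. Unset Printing Implicit Defensive.
Import Order.TTheory GRing.Theory Num.Theory.
Local Open Scope ring_scope.

Definition psums (s : seq int) : seq int := 0 :: scanl +%R 0 s.

Definition diagP (K : fieldType) (d : nat) (v : int -> 'rV[K]_d.+1)
    (I : seq int) (k : int) : {vspace 'rV[K]_d.+1} :=
  <<[seq v (k + j)%R | j <- psums I]>>%VS.

Definition hatv (K : fieldType) (d : nat) (v : int -> 'rV[K]_d.+1)
    (I R : seq int) (k : int) : {vspace 'rV[K]_d.+1} :=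
  (\bigcap_(j <- psums R) diagP v I (k + j)%R)%VS.

Definition twisted_ngon (K : fieldType) (d n : nat) (v : int -> 'rV[K]_d.+1) :=
  (forall k, v k != 0) /\
  exists2 M : 'M[K]_d.+1, M \in unitmx &
    forall k, <[v (k + n%:Z)%R]>%VS = <[v k *m M]>%VS.

Definition general_position (K : fieldType) (d : nat) (v : int -> 'rV[K]_d.+1) :=
  forall ks : seq int, uniq ks -> size ks = d.+1 -> free [seq v k | k <- ks].

Definition aprog (a : int) (m p : nat) : seq int :=
  [seq a + (i * m)%:Z | i <- iota 0 p].

(* J = \bigcap_{r in R} {r, r+m, ..., r+m(d-1)} (R nonempty) *)
Definition Jset (R : seq int) (m d : nat) : seq int :=
  undup [seq j <- aprog (head 0 R) m d | all (fun r => j \in aprog r m d) R].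

Definition longI (m d : nat) : seq int := nseq d.-1 (m%:Z).
Definition longR (Rs : seq int) : seq int :=
  let s := sort (fun x y : int => x <= y) Rs in
  pairmap (fun x y => y - x) (head 0 s) (behead s).

Definition exceptional (Rm Rp : seq int) (m d : nat) : Prop :=
  exists q : nat, (q.+2 <= d)%N /\
    ((Rm =i aprog 0 m q.+1 /\ Rp =i aprog (q.+1 * m)%:Z m (d - q.+1)) \/
     (Rp =i aprog 0 m q.+1 /\ Rm =i aprog (q.+1 * m)%:Z m (d - q.+1))).

(* Main.v *)
Require Import Defs.
From HB Require Import structures.
From mathcomp Require Import all_boot all_order all_algebra.
From mathcomp Require Import zify ring lra.
Import Order.TTheory GRing.Theory Num.Theory.
Local Open Scope ring_scope.

Module Helpers.
Set Implicit Arguments. Unset Strict Implicit. Unset Printing Implicit Defensive.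

Section Span.
Variables (K : fieldType) (vT : vectType K).

Lemma free_dim (X : seq vT) : free X -> \dim <<X>>%VS = size X.
Proof. by move/eqP. Qed.

Lemma cap_span (Y X Z : seq vT) : free (Y ++ X ++ Z) ->
  (<<Y ++ X>> :&: <<X ++ Z>> = <<X>>)%VS.
Proof.
move=> fr.
have fYX : free (Y ++ X) by move: fr; rewrite catA; exact: catl_free.
have fXZ : free (X ++ Z) by apply: catr_free fr.
have fX : free X by apply: catl_free fXZ.
have hs : (<<Y ++ X>> + <<X ++ Z>> = <<Y ++ X ++ Z>>)%VS.
  rewrite -span_cat; apply: eq_span => u; rewrite !mem_cat; by case: (u \in Y); case: (u \in X).
have := dimv_sum_cap <<Y ++ X>>%VS <<X ++ Z>>%VS.
rewrite hs !free_dim // !size_cat => e.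
apply/eqP; rewrite eq_sym eqEdim subv_cap !sub_span /=; last first.
- by move=> u; rewrite mem_cat => ->; rewrite ?orbT.
- by move=> u; rewrite mem_cat => ->; rewrite ?orbT.
rewrite free_dim //; lia.
Qed.
End Span.

Section Iota.
Variables (K : fieldType) (vT : vectType K) (w : nat -> vT).

Lemma cap_iota a b c e : (a <= b)%N -> (b <= c)%N -> (c <= e)%N ->
  free (map w (iota a (e - a))) ->
  (<<map w (iota a (c - a))>> :&: <<map w (iota b (e - b))>> = <<map w (iota b (c - b))>>)%VS.
Proof.
move=> hab hbc hce fr.
have e1 : iota a (c - a) = iota a (b - a) ++ iota b (c - b).
  by rewrite (_ : (c - a = (b - a) + (c - b))%N) ?iotaD ?subnKC //; lia.
have e2 : iota b (e - b) = iota b (c - b) ++ iota c (e - c).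
  by rewrite (_ : (e - b = (c - b) + (e - c))%N) ?iotaD ?subnKC //; lia.
have e3 : iota a (e - a) = iota a (b - a) ++ iota b (c - b) ++ iota c (e - c).
  by rewrite -e2 (_ : (e - a = (b - a) + (e - b))%N) ?iotaD ?subnKC //; lia.
rewrite e1 e2 !map_cat; apply: cap_span.
by rewrite -!map_cat -e3.
Qed.

Lemma bigcap_iota d l : (0 < l <= d)%N -> (forall i, free (map w (iota i d.+1))) ->
  forall i0, (\bigcap_(i <- iota i0 l) <<map w (iota i d)>> =
            <<map w (iota (i0 + l - 1) (d - l + 1))>>)%VS.
Proof.
move=> hl fr; elim: l hl => [//|l IH] hl i0.
case: l IH hl => [|l] IH hl.
  by rewrite /= big_seq1; congr (<< map w (iota _ _) >>)%VS; lia.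
rewrite /= big_cons -/(iota i0.+1 l.+1) IH; last by lia.
have -> : (i0.+1 + l.+1 - 1 = i0 + l.+1)%N by lia.
have -> : (d - l.+1 + 1 = (i0 + d).+1 - (i0 + l.+1))%N by lia.
have -> : (d - l.+2 + 1 = (i0 + d) - (i0 + l.+1))%N by lia.
have {1}-> : d = ((i0 + d) - i0)%N by lia.
have -> : (i0 + l.+2 - 1 = i0 + l.+1)%N by lia.
apply: cap_iota; try lia.
by have -> : ((i0 + d).+1 - i0 = d.+1)%N by lia.
Qed.
End Iota.

Lemma mulm_inj (m i j : nat) : (0 < m)%N -> (i * m)%N = (j * m)%N -> i = j.
Proof. by move=> hm /eqP; rewrite eqn_pmul2r // => /eqP. Qed.

Lemma apinj (a : int) (m : nat) : (0 < m)%N -> injective (fun i : nat => a + (i * m)%:Z).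
Proof. by move=> hm i j /addrI [] /(mulm_inj hm). Qed.

Lemma mem_ap_shift (a : int) (m d i i' : nat) : (0 < m)%N ->
  (a + (i * m)%:Z \in aprog (a + (i' * m)%:Z) m d) = (i' <= i < i' + d)%N.
Proof.
move=> hm; apply/mapP/idP => [[t ht]|h].
  rewrite -addrA -PoszD => /addrI [] /eqP; rewrite -mulnDl eqn_pmul2r // => /eqP ->.
  by rewrite mem_iota in ht; lia.
exists (i - i')%N; first by rewrite mem_iota; lia.
by rewrite -addrA -PoszD -mulnDl subnKC //; lia.
Qed.

Lemma Jset_ap (a : int) (m p d : nat) : (0 < m)%N -> (0 < p)%N -> (p <= d)%N ->
  Jset (aprog a m p) m d = [seq a + (i * m)%:Z | i <- iota p.-1 (d - p).+1].
Proof.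
move=> hm hp hpd; rewrite /Jset.
have -> : head 0 (aprog a m p) = a by case: p hp hpd => // p _ _; rewrite /= mul0n addr0.
rewrite {1}/aprog filter_map undup_id; last first.
  rewrite map_inj_uniq; last exact: apinj. by apply: filter_uniq; apply: iota_uniq.
congr map.
rewrite (eq_in_filter (a2 := fun i => (p.-1 <= i)%N)); last first.
  move=> i; rewrite mem_iota /= => hi; rewrite /preim /= /aprog all_map.
  apply/allP/idP => [H|H i' hi'].
    have := H p.-1; rewrite mem_iota /= /preim /= (mem_ap_shift _ _ _ _ hm).
    move=> /(_ ltac:(lia)). lia.
  rewrite /preim /= (mem_ap_shift _ _ _ _ hm); rewrite mem_iota in hi'; lia.
rewrite (_ : iota 0 d = iota 0 p.-1 ++ iota p.-1 (d - p).+1); last first.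
  by rewrite -iotaD; congr iota; lia.
rewrite filter_cat.
rewrite (eq_in_filter (a2 := pred0)); last by move=> i; rewrite mem_iota /=; lia.
rewrite filter_pred0 /= (eq_in_filter (a2 := predT)); last by move=> i; rewrite mem_iota /=; lia.
by rewrite ?filter_predT ?leqnn.
Qed.

Lemma scanl_nseq (m n : nat) (c : int) :
  scanl +%R c (nseq n (m%:Z)) = [seq c + ((i.+1 * m)%N)%:Z | i <- iota 0 n].
Proof.
elim: n c => [//|n IH] c /=; rewrite IH mul1n; congr cons.
rewrite (iotaDl 1 0) -map_comp; apply: eq_map => i /=.
by rewrite -addrA -PoszD -mulSn.
Qed.

Lemma psums_longI (m d : nat) : (0 < d)%N ->
  psums (longI m d) = [seq (i * m)%N%:Z | i <- iota 0 d].
Proof.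
case: d => // d _; rewrite /psums /longI /= scanl_nseq (iotaDl 1 0) -map_comp.
by rewrite mul0n; congr cons; apply: eq_map => i /=; rewrite add0r.
Qed.

Lemma scanl_pairmap (c x : int) (t : seq int) :
  scanl +%R c (pairmap (fun x y => y - x) x t) = [seq c + (y - x) | y <- t].
Proof.
elim: t c x => [//|y t IH] c x /=; rewrite IH; congr cons.
by apply: eq_map => z; rewrite -addrA; congr (_ + _); ring.
Qed.

Lemma psums_longR (s : seq int) : 0 \in s -> all (fun x => 0 <= x) s ->
  psums (longR s) = sort (fun x y : int => x <= y) s.
Proof.
move=> h0 hpos; rewrite /longR.
set t := sort _ s.
have st : sorted (fun x y : int => x <= y) t by apply: sort_sorted => x y; exact: le_total.
have h0t : 0 \in t by rewrite mem_sort.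
have hpt : all (fun x => 0 <= x) t by apply/allP => x; rewrite mem_sort; move/allP: hpos; apply.
case: t st h0t hpt => [//|h t] st h0t hpt.
have hh : h = 0.
  have := order_path_min (@le_trans _ int) st => /allP hmin.
  move: h0t; rewrite inE => /orP [/eqP -> //|/hmin h00].
  by apply/eqP; rewrite eq_le h00 /=; move: hpt => /= /andP [].
rewrite /psums /= scanl_pairmap hh; congr cons.
by rewrite -[RHS]map_id; apply: eq_map => y; rewrite add0r subr0.
Qed.

Lemma bigcap_ap (K : fieldType) (d m : nat) (v : int -> 'rV[K]_d.+1) (a k : int) (p : nat) :
  (0 < m)%N -> (0 < p)%N -> (p <= d)%N -> general_position v ->
  (\bigcap_(r <- aprog a m p) diagP v (longI m d) (k + r)%R)%VS =
  <<[seq v (k + j)%R | j <- Jset (aprog a m p) m d]>>%VS.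
Proof.
move=> hm hp hpd gp.
pose w := fun t : nat => v (k + a + (t * m)%N%:Z).
have hd : forall i, diagP v (longI m d) (k + (a + (i * m)%N%:Z)) = <<map w (iota i d)>>%VS.
  move=> i; rewrite /diagP psums_longI; last by lia.
  have -> : iota i d = map (addn i) (iota 0 d) by rewrite -iotaDl addn0.
  rewrite -!map_comp; congr span; apply: eq_map => t /=.
  by rewrite /w mulnDl PoszD; congr v; ring.
rewrite /aprog big_map (eq_bigr _ (fun i _ => hd i)) bigcap_iota; last first.
- move=> i.
  have -> : map w (iota i d.+1) = map v (map (fun t => k + a + (t * m)%N%:Z) (iota i d.+1)).
    by rewrite -map_comp.
  apply: gp; last by rewrite size_map size_iota.
  by rewrite map_inj_uniq ?iota_uniq //; apply: apinj.
- lia.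
rewrite Jset_ap // -map_comp /w; congr span.
have -> : (0 + p - 1 = p.-1)%N by lia.
have -> : (d - p + 1 = (d - p).+1)%N by lia.
by apply: eq_map => t /=; rewrite addrA.
Qed.

Lemma mem_ap (a x : int) (m p : nat) :
  reflect (exists2 t, (t < p)%N & x = a + (t * m)%N%:Z) (x \in aprog a m p).
Proof.
apply: (iffP mapP) => [[t ht ->]|[t ht ->]]; exists t => //; by rewrite mem_iota in ht *.
Qed.

Lemma aprog_uniq (a : int) (m p : nat) : (0 < m)%N -> uniq (aprog a m p).
Proof. by move=> hm; rewrite map_inj_uniq ?iota_uniq //; apply: apinj. Qed.

Lemma ap_eq (a b : int) (m p p' : nat) : (0 < m)%N -> (0 < p)%N -> (0 < p')%N ->
  aprog a m p =i aprog b m p' -> a = b /\ p = p'.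
Proof.
move=> hm hp hp' e; split.
  have /mem_ap [t _ ha] : a \in aprog b m p'.
    by rewrite -e; apply/mem_ap; exists 0%N => //; rewrite mul0n addr0.
  have /mem_ap [t' _ hb] : b \in aprog a m p.
    by rewrite e; apply/mem_ap; exists 0%N => //; rewrite mul0n addr0.
  lia.
have := perm_size (uniq_perm (aprog_uniq a p hm) (aprog_uniq b p' hm) e).
by rewrite !size_map !size_iota.
Qed.

Lemma meet_case (m pm pp d : nat) (am ap : int) (i i' : nat) : (0 < m)%N ->
  (pm + pp)%N = d -> (pm.-1 <= i)%N -> (i' < d)%N -> (i <= i')%N ->
  am + (i * m)%N%:Z = ap + (i' * m)%N%:Z -> am \notin aprog ap m pp ->
  am = ap + (pp * m)%N%:Z.
Proof.
move=> hm hd hi hi' hii e hn.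
have hle : (i * m <= i' * m)%N by rewrite leq_mul2r hii orbT.
have e2 : am = ap + ((i' - i) * m)%N%:Z by rewrite mulnBl; lia.
case: (ltnP (i' - i) pp) => h.
  by move/negP: hn; case; apply/mem_ap; exists (i' - i)%N.
by rewrite e2; congr (_ + Posz (_ * _)); lia.
Qed.

Lemma zero_case (ap : int) (m pm pp : nat) : (0 < m)%N -> (0 < pp)%N -> 0 <= ap ->
  0 \in aprog (ap + (pp * m)%N%:Z) m pm ++ aprog ap m pp -> ap = 0.
Proof.
move=> hm hpp hap; have hpm : (0 < pp * m)%N by rewrite muln_gt0 hpp.
rewrite mem_cat => /orP [/mem_ap [t _ e]|/mem_ap [t _ e]]; lia.
Qed.

Lemma exc_common (m d q : nat) : (0 < m)%N -> (q.+2 <= d)%N ->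
  exists j, j \in Jset (aprog 0 m q.+1) m d /\ j \in Jset (aprog (q.+1 * m)%N%:Z m (d - q.+1)) m d.
Proof.
move=> hm hq; exists (d.-1 * m)%N%:Z.
rewrite !Jset_ap //; try lia; split; apply/mapP.
  by exists d.-1; [rewrite mem_iota; lia | rewrite add0r].
exists (d - q.+1).-1; first by rewrite mem_iota; lia.
by rewrite -PoszD -mulnDl; congr (Posz (_ * _)); lia.
Qed.

Lemma exc_core (K : fieldType) (d m q : nat) (v : int -> 'rV[K]_d.+1) (k : int) :
  (0 < m)%N -> (q.+2 <= d)%N -> general_position v ->
  (<<[seq v (k + j)%R | j <- Jset (aprog 0 m q.+1) m d]>> :&:
   <<[seq v (k + j)%R | j <- Jset (aprog (q.+1 * m)%N%:Z m (d - q.+1)) m d]>>)%VS =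
  <[v (k + (d.-1 * m)%N%:Z)%R]>%VS.
Proof.
move=> hm hq gp; rewrite !Jset_ap //; try lia.
pose w := fun t : nat => v (k + (t * m)%N%:Z).
rewrite -!map_comp.
have e1 : [seq ((fun j => v (k + j)) \o (fun i : nat => 0 + (i * m)%N%:Z)) i | i <- iota q.+1.-1 (d - q.+1).+1]
    = map w (iota q (d - q)).
  have -> : (d - q.+1).+1 = (d - q)%N by lia.
  by apply: eq_map => i /=; rewrite add0r.
have e2 : [seq ((fun j => v (k + j)) \o (fun i : nat => (q.+1 * m)%N%:Z + (i * m)%N%:Z)) i
          | i <- iota (d - q.+1).-1 (d - (d - q.+1)).+1] = map w (iota d.-1 q.+2).
  have -> : iota d.-1 q.+2 = map (addn q.+1) (iota (d - q.+1).-1 (d - (d - q.+1)).+1).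
    by rewrite -iotaDl; f_equal; lia.
  by rewrite -map_comp; apply: eq_map => i /=; rewrite /w mulnDl PoszD.
rewrite e1 e2.
have fr : free (map w (iota q ((q + d).+1 - q))).
  have -> : map w (iota q ((q + d).+1 - q)) =
            map v (map (fun t : nat => k + (t * m)%N%:Z) (iota q ((q + d).+1 - q))).
    by rewrite -map_comp.
  apply: gp; last by rewrite size_map size_iota; lia.
  by rewrite map_inj_uniq ?iota_uniq //; apply: apinj.
have H := @cap_iota _ _ w q d.-1 d (q + d).+1 ltac:(lia) ltac:(lia) ltac:(lia) fr.
have h1 : ((q + d).+1 - d.-1 = q.+2)%N by lia.
have h2 : (d - d.-1 = 1)%N by lia.
rewrite h1 h2 in H; rewrite H /= span_seq1.
by [].
Qed.
End Helpers.
Import Helpers.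
Unset Implicit Arguments. Set Strict Implicit. Set Printing Implicit Defensive.
Theorem mainTheorem12 (K : realFieldType) (d m : nat)
    (am ap : int) (pm pp : nat) :
  (0 < m)%N -> (0 < pm)%N -> (0 < pp)%N -> (pm + pp)%N = d ->
  let Rm := aprog am m pm in
  let Rp := aprog ap m pp in
  all (fun x => x \notin Rp) Rm ->
  0 \in Rm ++ Rp -> all (fun x => 0 <= x) (Rm ++ Rp) ->
  let Jm := Jset Rm m d in
  let Jp := Jset Rp m d in
  let I := longI m d in
  let Rt := longR (Rm ++ Rp) in
  (size Jm + size Jp)%N = d.+2 /\
  (forall (n : nat) (v : int -> 'rV[K]_d.+1),
     (0 < n)%N -> twisted_ngon n v -> general_position v ->
     forall k : int,
       (\bigcap_(r <- Rm) diagP v I (k + r)%R)%VS = <<[seq v (k + j)%R | j <- Jm]>>%VS /\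
       (\bigcap_(r <- Rp) diagP v I (k + r)%R)%VS = <<[seq v (k + j)%R | j <- Jp]>>%VS /\
       hatv v I Rt k =
         (<<[seq v (k + j)%R | j <- Jm]>> :&: <<[seq v (k + j)%R | j <- Jp]>>)%VS) /\
  (~ exceptional Rm Rp m d -> forall j, j \in Jm -> j \notin Jp) /\
  (exceptional Rm Rp m d ->
     (exists j, j \in Jm /\ j \in Jp) /\
     exists s : int, forall (n : nat) (v : int -> 'rV[K]_d.+1),
       (0 < n)%N -> twisted_ngon n v -> general_position v ->
       forall k : int, hatv v I Rt k = <[v (k + s)%R]>%VS).
Proof.
move=> hm hpm hpp hd Rm Rp hdis h0 hpos Jm Jp I Rt.
have hpmd : (pm <= d)%N by lia.
have hppd : (pp <= d)%N by lia.
have hB : forall (v : int -> 'rV[K]_d.+1) k, general_position v ->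
       (\bigcap_(r <- Rm) diagP v I (k + r)%R)%VS = <<[seq v (k + j)%R | j <- Jm]>>%VS /\
       (\bigcap_(r <- Rp) diagP v I (k + r)%R)%VS = <<[seq v (k + j)%R | j <- Jp]>>%VS /\
       hatv v I Rt k =
         (<<[seq v (k + j)%R | j <- Jm]>> :&: <<[seq v (k + j)%R | j <- Jp]>>)%VS.
  move=> v k gp.
  have E1 := bigcap_ap am k hm hpm hpmd gp.
  have E2 := bigcap_ap ap k hm hpp hppd gp.
  split; first exact: E1.
  split; first exact: E2.
  rewrite /hatv /Rt psums_longR // (perm_big (Rm ++ Rp)); last by rewrite perm_sort.
  by rewrite big_cat /= E1 E2.
have amRm : am \in Rm by apply/mem_ap; exists 0%N => //; rewrite mul0n addr0.
have apRp : ap \in Rp by apply/mem_ap; exists 0%N => //; rewrite mul0n addr0.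
split.
  by rewrite /Jm /Jp !Jset_ap // !size_map !size_iota; lia.
split.
  by move=> n v _ _ gp k; exact: hB.
split.
  move=> nex j hjm; apply/negP => hjp; apply: nex.
  move: hjm hjp; rewrite /Jm /Jp !Jset_ap // => /mapP [i hi ei] /mapP [i' hi' ei'].
  rewrite !mem_iota in hi hi'.
  have e : am + (i * m)%N%:Z = ap + (i' * m)%N%:Z by rewrite -ei -ei'.
  case: (leqP i i') => hii.
  - have hn : am \notin aprog ap m pp by move/allP: hdis; apply.
    have eam := meet_case hm hd (i:=i) (i':=i') ltac:(lia) ltac:(lia) hii e hn.
    have hap0 : ap = 0.
      apply: (zero_case (m := m) (pm := pm) hm hpp).
        by move/allP: hpos; apply; rewrite mem_cat apRp orbT.
      by rewrite -eam.
    exists pp.-1; split; first by lia.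
    right; rewrite prednK //; split.
      by rewrite /Rp hap0 => x.
    rewrite /Rm eam hap0 add0r; have -> : (d - pp = pm)%N by lia.
    by move=> x.
  - have hn : ap \notin aprog am m pm.
      apply/negP => hin; move/allP: hdis => /(_ _ hin); by rewrite apRp.
    have hd' : (pp + pm)%N = d by lia.
    have eap := meet_case hm hd' (i:=i') (i':=i) ltac:(lia) ltac:(lia) (ltnW hii) (esym e) hn.
    have ham0 : am = 0.
      apply: (zero_case (m := m) (pm := pp) hm hpm).
        by move/allP: hpos; apply; rewrite mem_cat amRm.
      by rewrite -eap mem_cat orbC -mem_cat.
    exists pm.-1; split; first by lia.
    left; rewrite prednK //; split.
      by rewrite /Rm ham0 => x.
    rewrite /Rp eap ham0 add0r; have -> : (d - pm = pp)%N by lia.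
    by move=> x.
move=> [q [hq [[e1 e2]|[e1 e2]]]].
- have [ham hpmq] := ap_eq hm hpm (ltn0Sn q) e1.
  have [hap hppq] := ap_eq hm hpp (ltac:(lia) : (0 < d - q.+1)%N) e2.
  subst am pm ap pp.
  split; first exact: exc_common.
  exists (d.-1 * m)%N%:Z => n v _ _ gp k.
  have [_ [_ ->]] := hB v k gp.
  exact: exc_core.
- have [hap hppq] := ap_eq hm hpp (ltn0Sn q) e1.
  have [ham hpmq] := ap_eq hm hpm (ltac:(lia) : (0 < d - q.+1)%N) e2.
  subst am pm ap pp.
  split.
    by have [j [h1 h2]] := exc_common hm hq; exists j.
  exists (d.-1 * m)%N%:Z => n v _ _ gp k.
  have [_ [_ ->]] := hB v k gp.
  rewrite capvC; exact: exc_core.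
Qed.
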